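(* For every integer $s\ge 3$ there is a positive constant $c$ depending only on $s$ such that for all sufficiently large $n$, $$ f_{s,s+1}^{(2)}(n) \ge c\left(\frac{n\log n}{\log\log n}\right)^{1/2}. $$ That is, every $K_{s+1}$-free graph on $n$ vertices contains a set of at least $c\left(\frac{n\log n}{\log\log n}\right)^{1/2}$ vertices inducing no $K_s$.
   Context: For integers $2\le s<t$ and $n\ge 0$, $f_{s,t}^{(2)}(n)$ is the minimum, over all graphs $G$ on $n$ vertices containing no complete graph $K_t$, of the maximum size of a vertex subset $W\subseteq V(G)$ such that the induced subgraph $G[W]$ contains no $K_s$. All logarithms are natural logarithms. *)

(* Defs.v *)
From mathcomp Require Import all_boot.
From Stdlib Require Import Reals.
Set Implicit Arguments. Unset Strict Implicit. Unset Printing Implicit Defensive.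

Definition simple_graph (T : finType) (e : rel T) : Prop :=
  (forall x y, e x y = e y x) /\ (forall x, e x x = false).

Definition is_clique (T : finType) (e : rel T) (K : {set T}) : Prop :=
  forall x y, x \in K -> y \in K -> x != y -> e x y.

Definition has_Kt (T : finType) (e : rel T) (t : nat) : Prop :=
  exists K : {set T}, #|K| = t /\ is_clique e K.

Definition induced_has_Kt (T : finType) (e : rel T) (W : {set T}) (s : nat) : Prop :=
  exists K : {set T}, K \subset W /\ #|K| = s /\ is_clique e K.

(* Main.v *)
Require Import Defs.
From mathcomp Require Import all_boot.
From Stdlib Require Import Reals Lra Psatz ZArith Classical.
From mathcomp Require Import ssrnat.
From mathcomp Require Import zify.
Open Scope R_scope.

Lemma ln_le' x y : 0 < x -> x <= y -> ln x <= ln y.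
Proof.
move=> hx [h|->]; [left; exact: ln_increasing | lra].
Qed.

Lemma ln_le_inv' x y : 0 < x -> 0 < y -> ln x <= ln y -> x <= y.
Proof.
move=> hx hy h; destruct (Rle_lt_dec x y) as [|h']; first by [].
have := ln_increasing _ _ hy h'; lra.
Qed.

Lemma ln_le_sub1 z : 0 < z -> ln z <= z - 1.
Proof. move=> hz; have := exp_ineq1_le (ln z); rewrite exp_ln //; lra. Qed.

Lemma ln_sqrt' z : 0 < z -> ln (sqrt z) = ln z / 2.
Proof.
move=> hz; have hs : 0 < sqrt z by apply: sqrt_lt_R0.
have : ln (sqrt z * sqrt z) = ln (sqrt z) + ln (sqrt z) by rewrite ln_mult.
rewrite sqrt_sqrt; lra.
Qed.

Lemma ln_le_2sqrt z : 0 < z -> ln z <= 2 * sqrt z.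
Proof.
move=> hz; have hs : 0 < sqrt z by apply: sqrt_lt_R0.
have := ln_le_sub1 _ hs; rewrite ln_sqrt' //; lra.
Qed.

Lemma ln3 : 1 <= ln 3.
Proof. rewrite -{1}(ln_exp 1); apply: ln_le'; [apply: exp_pos| exact: exp_le_3]. Qed.

Lemma asympt (K0 : R) : 0 <= K0 -> forall x, exp (3 + 4 * K0 * K0) <= x ->
  [/\ 1 <= x, 3 <= ln x, 1 <= ln (ln x), K0 <= ln x / ln (ln x) &
      ln x / ln (ln x) <= ln x].
Proof.
move=> hK x hx.
have ex : 0 < exp (3 + 4 * K0 * K0) by apply: exp_pos.
have x0 : 0 < x by lra.
have hl : 3 + 4 * K0 * K0 <= ln x.
  by rewrite -(ln_exp (3 + 4 * K0 * K0)); apply: ln_le'.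
have l3 : 3 <= ln x by nra.
have ll : 1 <= ln (ln x).
  apply: Rle_trans ln3 _; apply: ln_le'; lra.
have x1 : 1 <= x.
  have : 1 <= exp (3 + 4 * K0 * K0).
    have := exp_ineq1_le (3 + 4 * K0 * K0); nra.
  lra.
split => //.
- have h2 := ln_le_2sqrt (ln x) ltac:(lra).
  have hs : 2 * K0 <= sqrt (ln x).
    rewrite -(sqrt_square (2 * K0)); last lra.
    apply: sqrt_le_1; nra.
  apply: (Rmult_le_reg_r (ln (ln x))); first lra.
  rewrite /Rdiv Rmult_assoc Rinv_l; last lra.
  have : 0 <= sqrt (ln x) by apply: sqrt_pos.
  have : sqrt (ln x) * sqrt (ln x) = ln x by apply: sqrt_sqrt; lra.
  nra.
- apply: (Rmult_le_reg_r (ln (ln x))); first lra.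
  rewrite /Rdiv Rmult_assoc Rinv_l; last lra.
  nra.
Qed.
Close Scope R_scope.

Set Implicit Arguments. Unset Strict Implicit. Unset Printing Implicit Defensive.

Definition indepb (T : finType) (e : rel T) (S : {set T}) : bool :=
  [forall x in S, forall y in S, ~~ e x y].

Lemma indepbP (T : finType) (e : rel T) (S : {set T}) :
  reflect (forall x y, x \in S -> y \in S -> ~~ e x y) (indepb e S).
Proof.
apply: (iffP forallP) => [H x y xS yS | H x].
  by have /implyP/(_ xS)/forallP/(_ y)/implyP/(_ yS) := H x.
by apply/implyP => xS; apply/forallP => y; apply/implyP => yS; apply: H.
Qed.

Lemma expn_mono m n k : m <= n -> m ^ k <= n ^ k.
Proof. by move=> h; elim: k => // k IH; rewrite !expnS leq_mul. Qed.

Lemma card_le3 (T : finType) (v : T) (A B U : {set T}) :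
  U \subset v |: (A :|: B) -> #|U| <= (#|A| + #|B|).+1.
Proof.
move=> sU; apply: (leq_trans (subset_leq_card sU)).
rewrite cardsU1; apply: (leq_trans (leq_add (leq_b1 _) (leq_card_setU A B))).
by rewrite add1n.
Qed.

Lemma ramsey (T : finType) (e : rel T) :
  (forall x y, e x y = e y x) -> (forall x, e x x = false) ->
  forall (s a : nat) (U : {set T}),
  (forall K : {set T}, K \subset U -> #|K| = s.+1 -> ~ is_clique e K) ->
  (forall S : {set T}, S \subset U -> indepb e S -> #|S| <= a) ->
  #|U| < (a.+1) ^ s.
Proof.
move=> esym eirr; elim=> [|s IHs].
  move=> a U Hc _; suff -> : U = set0 by rewrite cards0 expn_gt0.
  apply/setP => x.
  rewrite inE; apply/negP => xU; apply: (Hc [set x]); first by rewrite sub1set.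
    by rewrite cards1.
  by move=> y z; rewrite !inE => /eqP-> /eqP->; rewrite eqxx.
elim=> [|a IHa] U Hc Hi.
  suff -> : U = set0 by rewrite cards0 expn_gt0.
  apply/setP => x.
  rewrite inE; apply/negP => xU.
  have := Hi [set x]; rewrite sub1set cards1 => /(_ xU) H.
  suff /H : indepb e [set x] by [].
  by apply/indepbP => y z; rewrite !inE => /eqP-> /eqP->; rewrite eirr.
have [->|[v vU]] := set_0Vmem U; first by rewrite cards0 expn_gt0.
set U1 := U :&: [set u | e v u].
set U2 := [set u in U | (u != v) && ~~ e v u].
have h1 : #|U1| < (a.+2) ^ s.
  apply: IHs.
    move=> K sK cK clK; apply: (Hc (v |: K)).
    - by rewrite subUset sub1set vU (subset_trans sK) // subsetIl.
    - rewrite cardsU1 cK; case: (boolP (v \in K)) => // vK.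
      by have := subsetP sK v vK; rewrite !inE eirr andbF.
    - move=> x y; rewrite !inE => /orP[/eqP->|xK] /orP[/eqP->|yK];
        rewrite ?eqxx // => nxy.
      + by have := subsetP sK y yK; rewrite !inE => /andP[].
      + by rewrite esym; have := subsetP sK x xK; rewrite !inE => /andP[].
      + exact: clK.
  move=> S sS; apply: Hi; exact: (subset_trans sS (subsetIl _ _)).
have h2 : #|U2| < (a.+1) ^ s.+1.
  apply: IHa.
    move=> K sK cK clK; apply: (Hc K) => //.
    by apply: (subset_trans sK); apply/subsetP => x; rewrite inE => /andP[].
  move=> S sS iS; rewrite -ltnS.
  have vS : v \notin S by apply/negP => /(subsetP sS); rewrite inE eqxx andbF.
  have := Hi (v |: S); rewrite cardsU1 vS add1n; apply.
    rewrite subUset sub1set vU; apply/subsetP => x /(subsetP sS).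
    by rewrite inE => /andP[].
  apply/indepbP => x y; rewrite !inE => /orP[/eqP->|xS] /orP[/eqP->|yS].
  - by rewrite eirr.
  - by have := subsetP sS y yS; rewrite inE => /and3P[].
  - by rewrite esym; have := subsetP sS x xS; rewrite inE => /and3P[].
  - by move/indepbP: iS; apply.
have sU : U \subset v |: (U1 :|: U2).
  apply/subsetP => x xU; rewrite !inE xU /=.
  by case: (x =P v) => //= _; case: (e v x).
apply: (leq_ltn_trans (card_le3 sU)).
have -> : (a.+2) ^ s.+1 = (a.+2) ^ s + (a.+2)^s * a.+1 by rewrite expnS; lia.
rewrite -addnS -addSn; apply: leq_add; first by [].
apply: (leq_trans h2).
by rewrite expnSr leq_mul2r expn_mono ?orbT.
Qed.
Lemma small_sets (T : finType) (U : {set T}) (j : nat) :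
  #|[set S : {set T} | (S \subset U) && (#|S| <= j)]| <= (#|U|).+1 ^ j.
Proof.
elim: j => [|j IH].
  have sub : [set S : {set T} | (S \subset U) && (#|S| <= 0)] \subset [set set0].
    by apply/subsetP => S; rewrite !inE leqn0 cards_eq0 andbC => /andP[].
  by rewrite expn0; apply: (leq_trans (subset_leq_card sub)); rewrite cards1.
set A := [set S : {set T} | (S \subset U) && (#|S| <= j)] in IH *.
have sub : [set S : {set T} | (S \subset U) && (#|S| <= j.+1)] \subset
   A :|: [set p.2 |: p.1 | p in setX A U].
  apply/subsetP => S; rewrite inE => /andP[sSU cS].
  have [->|[y yS]] := set_0Vmem S; first by rewrite !inE sub0set cards0.
  apply/setUP; right; apply/imsetP; exists (S :\ y, y).
    rewrite !inE (subsetP sSU y yS) andbT; apply/andP; split.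
      by apply: (subset_trans _ sSU); apply: subsetDl.
    by move: cS; rewrite (cardsD1 y S) yS add1n ltnS.
  by rewrite /= setD1K.
apply: (leq_trans (subset_leq_card sub)).
apply: (leq_trans (leq_card_setU _ _)).
apply: (leq_trans (leq_add (leqnn _) (leq_imset_card _ _))).
rewrite cardsX expnS.
have : #|A| + #|A| * #|U| = #|A| * #|U|.+1 by lia.
move=> ->; rewrite mulnC; exact: leq_mul.
Qed.

Definition Cond (r lam D : nat) : Prop :=
  forall a : nat, 2 * (a.+1) ^ (r * (2 * lam - 1)) < 2 ^ a \/
                  lam * (2 * (a.+1) ^ (r * (2 * lam - 1)) + 2) <= D.

Definition SU (T : finType) (e : rel T) (U : {set T}) : {set {set T}} :=
  [set S : {set T} | (S \subset U) && indepb e S].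

Lemma local (T : finType) (e : rel T) :
  (forall x y, e x y = e y x) -> (forall x, e x x = false) ->
  forall (r D lam : nat) (U : {set T}),
  (forall K : {set T}, K \subset U -> #|K| = r.+1 -> ~ is_clique e K) ->
  Cond r lam D ->
  lam * (#|SU e U|).+1 <= D + \sum_(S in SU e U) #|S|.
Proof.
move=> esym eirr r D lam U Hc HC.
have s0 : (set0 : {set T}) \in SU e U.
  by rewrite inE sub0set /=; apply/indepbP => x y; rewrite inE.
set A := [arg max_(S > set0 in SU e U) #|S|].
have [AS Amax] : A \in SU e U /\ forall S, S \in SU e U -> #|S| <= #|A|.
  by rewrite /A; case: arg_maxnP.
set a := #|A|.
have hU : #|U| < a.+1 ^ r.
  apply: ramsey => // S sS iS; apply: Amax; by rewrite inE sS.
set m := #|SU e U|.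
have hm : 2 ^ a <= m.
  rewrite -card_powerset; apply: subset_leq_card; apply/subsetP => S.
  move: AS; rewrite !inE => /andP[sAU iA] sSA.
  rewrite (subset_trans sSA sAU) /=; apply/indepbP => x y xS yS.
  by move/indepbP: iA; apply; apply: (subsetP sSA).
set B := [set S : {set T} | 2 * lam <= #|S|].
set P := #|SU e U :\: B|.
set Q := a.+1 ^ (r * (2 * lam - 1)).
have hP : P <= Q.
  have sub : SU e U :\: B \subset
     [set S : {set T} | (S \subset U) && (#|S| <= 2 * lam - 1)].
    apply/subsetP => S; rewrite !inE => /andP[hB /andP[-> _]] /=.
    move: hB; rewrite -ltnNge; lia.
  apply: (leq_trans (subset_leq_card sub)); apply: (leq_trans (small_sets _ _)).
  rewrite /Q expnM; apply: expn_mono; exact: hU.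
have hsum : 2 * lam * (m - P) <= \sum_(S in SU e U) #|S|.
  rewrite (big_setID B) /=.
  apply: leq_trans (leq_addr _ _).
  have -> : m - P = #|SU e U :&: B| by rewrite /m /P -(cardsID B (SU e U)) addnK.
  rewrite mulnC -sum_nat_const; apply: leq_sum => S; rewrite !inE => /andP[].
  by [].
case: (ltnP (2 * P) m) => hPm.
  apply: (leq_trans _ (leq_addl _ _)); apply: leq_trans hsum.
  have -> : 2 * lam * (m - P) = lam * (2 * (m - P)) by rewrite mulnCA mulnA.
  rewrite leq_mul2l; apply/orP; right; lia.
case: (HC a) => hC.
  exfalso; have : 2 ^ a <= 2 * Q by lia.
  by rewrite leqNgt hC.
apply: (leq_trans _ (leq_addr _ _)); apply: leq_trans hC.
rewrite leq_mul2l; apply/orP; right; lia.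
Qed.

Definition Nb (T : finType) (e : rel T) (v : T) : {set T} := [set u | e v u].
Definition Ind (T : finType) (e : rel T) : {set {set T}} := [set I | indepb e I].
Definition UJ (T : finType) (e : rel T) (v : T) (J : {set T}) : {set T} :=
  [set u | e v u && [forall w in J, ~~ e u w]].

Lemma fibre (T : finType) (e : rel T) :
  (forall x y, e x y = e y x) -> (forall x, e x x = false) ->
  forall (v : T) (I0 : {set T}), indepb e I0 ->
  let J := I0 :\: (v |: Nb e v) in
  [set I in Ind e | I :\: (v |: Nb e v) == J] =
  [set J :|: S | S in [set v] |: SU e (UJ e v J)].
Proof.
move=> esym eirr v I0 iI0 J.
have iJ : indepb e J.
  apply/indepbP => x y; rewrite !inE => /andP[_ xI] /andP[_ yI].
  by move/indepbP: iI0; apply.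
have Jv : forall w, w \in J -> (w != v) && ~~ e v w.
  by move=> w; rewrite !inE negb_or => /andP[/andP[-> ->]].
apply/setP => I; apply/idP/idP.
- rewrite !inE => /andP[iI /eqP pI].
  have iIP := elimT (indepbP e I) iI.
  apply/imsetP; exists (I :&: (v |: Nb e v)).
    case: (boolP (v \in I)) => vI.
      apply/setU1P; left; apply/setP => x; rewrite !inE.
      apply/idP/idP => [/andP[xI /orP[//|evx]]|/eqP->]; last by rewrite eqxx vI.
      by have := iIP _ _ vI xI; rewrite evx.
    apply/setU1P; right; rewrite inE; apply/andP; split.
      apply/subsetP => x; rewrite !inE => /andP[xI /orP[/eqP xv|evx]].
        by move: vI; rewrite -xv xI.
      rewrite evx /=; apply/forallP => w; apply/implyP => wJ.
      apply: iIP => //; move: wJ; rewrite -pI inE => /andP[].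
      by [].
    apply/indepbP => x y; rewrite !inE => /andP[xI _] /andP[yI _]; exact: iIP.
  rewrite -pI; apply/setP => x; rewrite !inE.
  by case: (x \in I); case: (x == v); case: (e v x).
- case/imsetP => S SX ->; rewrite !inE.
  have SN : S \subset v |: Nb e v.
    move: SX; rewrite !inE => /orP[/eqP->|/andP[sS _]].
      by rewrite sub1set !inE eqxx.
    apply: (subset_trans sS); apply/subsetP => x; rewrite !inE => /andP[-> _].
    by rewrite orbT.
  apply/andP; split; last first.
    apply/eqP/setP => x; rewrite in_setD [x \in J :|: S]in_setU.
    case: (boolP (x \in J)) => xJ /=.
      by case/andP: (Jv x xJ) => xv evx; rewrite !inE negb_or xv evx.
    case: (boolP (x \in S)) => xS; last by rewrite andbF.
    by rewrite (subsetP SN x xS).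
  apply/indepbP => x y; rewrite !in_setU.
  have crossS : forall u w, u \in S -> w \in J -> ~~ e u w.
    move=> u w uS wJ; move: SX; rewrite !inE => /orP[/eqP SE|/andP[sS _]].
      by move: uS; rewrite SE inE => /eqP->; case/andP: (Jv w wJ).
    have := subsetP sS u uS; rewrite inE => /andP[_ /forallP/(_ w)].
    by rewrite wJ.
  have iS : indepb e S.
    move: SX; rewrite !inE => /orP[/eqP->|/andP[_ //]].
    by apply/indepbP => p q; rewrite !inE => /eqP-> /eqP->; rewrite eirr.
  move=> /orP[xJ|xS] /orP[yJ|yS].
  + by move/indepbP: iJ; apply.
  + by rewrite esym; apply: crossS.
  + exact: crossS.
  + by move/indepbP: iS; apply.
Qed.

Definition fv (T : finType) (e : rel T) (D : nat) (v : T) (I : {set T}) : nat :=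
  D * (v \in I) + #|Nb e v :&: I|.

Lemma pervertex (T : finType) (e : rel T) :
  (forall x y, e x y = e y x) -> (forall x, e x x = false) ->
  forall (r D lam : nat) (v : T),
  (forall K : {set T}, #|K| = r.+2 -> ~ is_clique e K) ->
  Cond r lam D ->
  lam * #|Ind e| <= \sum_(I in Ind e) fv e D v I.
Proof.
move=> esym eirr r D lam v Hc HC.
pose p := fun I : {set T} => I :\: (v |: Nb e v).
rewrite -sum1_card (partition_big_imset p) (partition_big_imset p (Ind e)) /=.
rewrite big_distrr /=; apply: leq_sum => J /imsetP[I0 I0in ->].
have iI0 : indepb e I0 by move: I0in; rewrite inE.
set J0 := p I0.
have eqF : forall F : {set T} -> nat,
    \sum_(I in Ind e | p I == J0) F I =
    \sum_(S in [set v] |: SU e (UJ e v J0)) F (J0 :|: S).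
  move=> F.
  have -> : \sum_(I in Ind e | p I == J0) F I =
            \sum_(I in [set I in Ind e | I :\: (v |: Nb e v) == J0]) F I.
    by apply: eq_bigl => I; rewrite inE.
  rewrite (fibre esym eirr v iI0) big_imset //.
  have XN : forall S : {set T}, S \in [set v] |: SU e (UJ e v J0) -> S \subset v |: Nb e v.
    move=> S; rewrite !inE => /orP[/eqP->|/andP[sS _]].
      by rewrite sub1set !inE eqxx.
    apply: (subset_trans sS); apply/subsetP => x; rewrite !inE => /andP[-> _].
    by rewrite orbT.
  move=> S1 S2 /XN h1 /XN h2 /= E.
  have key : forall S : {set T}, S \subset v |: Nb e v -> S = (J0 :|: S) :&: (v |: Nb e v).
    move=> S hS; rewrite setIUl.
    have -> : J0 :&: (v |: Nb e v) = set0.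
      by apply/setP => x; rewrite /J0 /p !inE; case: (x == v); case: (e v x);
         rewrite ?andbF.
    by rewrite set0U; symmetry; apply/setIidPl.
  by rewrite (key _ h1) E -key.
rewrite !eqF.
have vU : [set v] \notin SU e (UJ e v J0).
  rewrite inE negb_and; apply/orP; left; rewrite sub1set !inE eirr //.
rewrite !big_setU1 //=.
have vJ : v \notin J0 by rewrite /J0 /p !inE eqxx.
have -> : fv e D v (J0 :|: [set v]) = D.
  rewrite /fv !inE eqxx orbT muln1.
  suff -> : Nb e v :&: (J0 :|: [set v]) = set0 by rewrite cards0 addn0.
  apply/setP => x; rewrite !inE /J0 /p ?inE.
  case: (boolP (x == v)) => [/eqP->|_]; first by rewrite eirr.
  by case: (e v x).
rewrite sum_nat_const -[1 + _]addn1 addnC.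
have -> : \sum_(i in SU e (UJ e v J0)) fv e D v (J0 :|: i) =
          \sum_(i in SU e (UJ e v J0)) #|i|.
  apply: eq_bigr => S; rewrite inE => /andP[sS _].
  have SN : forall x, x \in S -> e v x.
    by move=> x /(subsetP sS); rewrite inE => /andP[].
  rewrite /fv in_setU (negbTE vJ) /=.
  have -> : (v \in S) = false by apply/negP => /SN; rewrite eirr.
  rewrite muln0 add0n; congr (#|pred_of_set _|); apply/setP => x; rewrite !inE.
  case: (boolP (x \in S)) => xS; first by rewrite (SN x xS) orbT.
  rewrite orbF; apply/negP => /andP[evx].
  by rewrite evx orbT.
rewrite muln1 add1n.
apply: (local esym eirr (r := r) (D := D) (lam := lam) (U := UJ e v J0)) => //.
move=> K sK cK clK; apply: (Hc (v |: K)).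
  rewrite cardsU1 cK; case: (boolP (v \in K)) => // vK.
  by have := subsetP sK v vK; rewrite !inE eirr.
move=> x y; rewrite !inE => /orP[/eqP->|xK] /orP[/eqP->|yK];
  rewrite ?eqxx // => nxy.
+ by have := subsetP sK y yK; rewrite !inE => /andP[].
+ by rewrite esym; have := subsetP sK x xK; rewrite !inE => /andP[].
+ exact: clK.
Qed.

Lemma cardE' (T : finType) (A : {set T}) : #|A| = \sum_x (x \in A).
Proof. by rewrite -sum1_card big_mkcond; apply: eq_bigr => x _; case: (x \in A). Qed.

Lemma stepB (T : finType) (e : rel T) :
  (forall x y, e x y = e y x) ->
  forall (D : nat) (I : {set T}),
  (forall v, #|Nb e v| <= D) ->
  \sum_v fv e D v I <= 2 * D * #|I|.
Proof.
move=> esy D I HD.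
rewrite /fv big_split /= -big_distrr /= -cardE'.
have -> : 2 * D * #|I| = D * #|I| + D * #|I| by lia.
rewrite leq_add2l.
have -> : \sum_v #|Nb e v :&: I| = \sum_v \sum_u ((u \in I) * e u v).
  apply: eq_bigr => v _; rewrite cardE'; apply: eq_bigr => u _.
  by rewrite !inE esy mulnb andbC.
rewrite exchange_big /=.
rewrite cardE' big_distrr /=; apply: leq_sum => u _.
rewrite -big_distrr /= mulnC; apply: leq_mul => //.
apply: leq_trans (HD u); rewrite cardE'; apply: leq_sum => v _; by rewrite inE.
Qed.

Lemma core (T : finType) (e : rel T) :
  (forall x y, e x y = e y x) -> (forall x, e x x = false) ->
  forall (r D lam : nat),
  (forall K : {set T}, #|K| = r.+2 -> ~ is_clique e K) ->
  Cond r lam D ->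
  (forall v, #|Nb e v| <= D) ->
  exists I : {set T}, indepb e I /\ lam * #|T| <= 2 * D * #|I|.
Proof.
move=> esy eirr r D lam Hc HC HD.
have s0 : (set0 : {set T}) \in Ind e by rewrite inE; apply/indepbP => x y; rewrite inE.
set Im := [arg max_(I > set0 in Ind e) #|I|].
have [Imin Imax] : Im \in Ind e /\ forall I, I \in Ind e -> #|I| <= #|Im|.
  by rewrite /Im; case: arg_maxnP.
exists Im; split; first by move: Imin; rewrite inE.
have pos : 0 < #|Ind e| by apply/card_gt0P; exists set0.
rewrite -(leq_pmul2r pos).
apply: (@leq_trans (\sum_v \sum_(I in Ind e) fv e D v I)).
  have -> : lam * #|T| * #|Ind e| = \sum_(v : T) (lam * #|Ind e|).
    rewrite sum_nat_const cardT -cardE; lia.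
  apply: leq_sum => v _.
  exact: (pervertex esy eirr (r := r) (D := D) (lam := lam) v Hc HC).
rewrite exchange_big /=.
have -> : 2 * D * #|Im| * #|Ind e| = \sum_(I in Ind e) (2 * D * #|Im|).
  by rewrite sum_nat_const mulnC.
apply: leq_sum => I Iin.
apply: (leq_trans (stepB esy I HD)).
by rewrite leq_mul2l Imax ?orbT.
Qed.

Lemma bern (n q : nat) : q <= n -> (n.+1) ^ q * (n - q) <= n ^ q.+1.
Proof.
elim: q => [|q IH] h; first by rewrite expn0 mul1n subn0 expn1.
have IH' := IH (ltnW h).
rewrite expnS [n ^ q.+2]expnS.
move: IH'; set X := _ ^ q; set Y := n ^ q.+1 => IH'.
have h1 : (n.+1) * (n - q.+1) <= n * (n - q) by nia.
apply: (@leq_trans (X * (n * (n - q)))).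
  by rewrite [n.+1 * X]mulnC -mulnA leq_mul2l h1 orbT.
by rewrite mulnCA leq_mul2l IH' orbT.
Qed.

Lemma step2 (n q : nat) : 0 < n -> q.*2 <= n -> (n.+1) ^ q <= 2 * n ^ q.
Proof.
move=> n0 h.
have qn : q <= n by lia.
move: (bern qn); rewrite expnSr.
set X := _ ^ q; set Y := n ^ q => hb.
rewrite -(leq_pmul2r n0).
have : n <= 2 * (n - q) by lia.
move=> h2; apply: (@leq_trans (X * (2 * (n - q)))); first by rewrite leq_mul2l h2 orbT.
rewrite mulnCA -mulnA leq_mul2l; apply/orP; right.
exact: hb.
Qed.

Lemma base16 (k : nat) : 0 < k -> 16 * k ^ 2 + 1 <= 2 ^ (8 * k).
Proof.
move=> k0.
have hk : k <= 2 ^ k by apply: ltnW; apply: ltn_expl.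
have h1 : k ^ 2 <= 2 ^ (2 * k) by rewrite mulnC expnM; apply: expn_mono.
apply: (@leq_trans (2 ^ (2 * k + 5))).
  rewrite expnD; have : 0 < 2 ^ (2 * k) by rewrite expn_gt0. lia.
by rewrite leq_exp2l //; lia.
Qed.

Lemma bigpow (q a : nat) : 16 * (q.+1) ^ 2 <= a -> 4 * (a.+1) ^ q <= 2 ^ a.
Proof.
move=> ha; rewrite -(subnKC ha); elim: (a - _) => [|d IH].
  rewrite addn0.
  apply: (@leq_trans (4 * 2 ^ (8 * q.+1 * q))).
    rewrite leq_mul2l; apply/orP; right.
    rewrite mulnC expnM; apply: expn_mono.
    by rewrite mulnC -addn1; apply: base16.
  rewrite -(expnD 2 2) leq_exp2l //; nia.
rewrite addnS.
apply: (@leq_trans (2 * (4 * (16 * q.+1 ^ 2 + d).+1 ^ q))).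
  rewrite mulnCA leq_mul2l; apply/orP; right; apply: step2 => //.
  have : q <= q.+1 ^ 2 by rewrite expnS; nia.
  lia.
by rewrite expnS leq_mul2l IH orbT.
Qed.

Lemma condOK (r lam D : nat) :
  (10 * r.+1 * lam) ^ (10 * r.+1 * lam) <= D -> 0 < lam -> Cond r lam D.
Proof.
move=> hD l0 a.
set q := r * (2 * lam - 1).
set B := 10 * r.+1 * lam.
have hq : q <= 2 * r * lam by rewrite /q; nia.
have hB : 10 <= B by rewrite /B; nia.
case: (leqP (16 * q.+1 ^ 2) a) => ha.
  left; have := bigpow ha.
  have : 0 < a.+1 ^ q by rewrite expn_gt0.
  lia.
right; apply: leq_trans hD.
have h1 : a.+1 <= B ^ 2.
  apply: (leq_trans ha); rewrite /B; nia.
have h2 : a.+1 ^ q <= B ^ (2 * q) by rewrite expnM; apply: expn_mono.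
have h3 : 0 < a.+1 ^ q by rewrite expn_gt0.
have h4 : lam * 4 <= B ^ 2 by rewrite /B; nia.
apply: (@leq_trans (B ^ 2 * B ^ (2 * q))).
  apply: (@leq_trans (lam * 4 * a.+1 ^ q)); first by nia.
  by apply: leq_mul.
rewrite -expnD; apply: leq_pexp2l; first by lia.
rewrite /B; nia.
Qed.

Lemma nbhd_W (T : finType) (e : rel T) (s : nat) (v : T) :
  (forall x y, e x y = e y x) -> (forall x, e x x = false) ->
  ~ has_Kt e s.+1 -> ~ induced_has_Kt e (Nb e v) s.
Proof.
move=> esy eirr hK [K [sK [cK clK]]]; apply: hK; exists (v |: K); split.
  rewrite cardsU1 cK; case: (boolP (v \in K)) => // vK.
  by have := subsetP sK v vK; rewrite !inE eirr.
move=> x y; rewrite !inE => /orP[/eqP->|xK] /orP[/eqP->|yK];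
  rewrite ?eqxx // => nxy.
+ by have := subsetP sK y yK; rewrite !inE.
+ by rewrite esy; have := subsetP sK x xK; rewrite !inE.
+ exact: clK.
Qed.

Lemma indep_W (T : finType) (e : rel T) (s : nat) (I : {set T}) :
  1 < s -> indepb e I -> ~ induced_has_Kt e I s.
Proof.
move=> hs iI [K [sK [cK clK]]].
have : 1 < #|K| by rewrite cK.
case/card_gt1P => x [y [xK yK nxy]].
have := clK x y xK yK nxy.
by move/indepbP: iI => /(_ x y (subsetP sK x xK) (subsetP sK y yK)) /negbTE ->.
Qed.

Lemma INR_expn a b : INR (a ^ b) = (INR a ^ b)%R.
Proof. elim: b => [|b IH]; first by rewrite expn0. by rewrite expnS mult_INR IH. Qed.

Lemma INR_Z (z : Z) : (0 <= z)%Z -> INR (Z.to_nat z) = IZR z.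
Proof. by move=> hz; rewrite INR_IZR_INZ Z2Nat.id. Qed.

Theorem mainTheorem3 :
  forall s : nat, 3 <= s ->
  exists c : R, (0 < c)%R /\
  exists N : nat, forall n : nat, N <= n ->
  forall e : rel 'I_n, simple_graph e -> ~ has_Kt e s.+1 ->
  exists W : {set 'I_n}, ~ induced_has_Kt e W s /\
    (c * sqrt (INR n * ln (INR n) / ln (ln (INR n))) <= INR #|W|)%R.
Proof.
move=> s hs.
set Mr := INR (10 * s).
have Mr1 : (1 <= Mr)%R.
  rewrite /Mr; change 1%R with (INR 1); apply: le_INR; apply/leP; lia.
set eps := (/ (2 * Mr))%R.
have eps0 : (0 < eps)%R by rewrite /eps; apply: Rinv_0_lt_compat; lra.
exists (eps / 8)%R; split; first lra.
set K0 := (2 / eps)%R.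
have K0e : (K0 = 4 * Mr)%R by rewrite /K0 /eps; field; lra.
have K00 : (0 <= K0)%R by lra.
set Y := (3 + 4 * K0 * K0)%R.
have upY : (0 <= up (exp Y))%Z.
  have [h _] := archimed (exp Y); have := exp_pos Y => h'.
  apply: le_IZR; lra.
exists (Z.to_nat (up (exp Y))) => n hn e [esy eirr] hK.
have hx : (exp Y <= INR n)%R.
  have [h _] := archimed (exp Y).
  have : (INR (Z.to_nat (up (exp Y))) <= INR n)%R by apply: le_INR; apply/leP.
  rewrite INR_Z //; lra.
have [x1 l3 ll hL hLl] := asympt K0 K00 (INR n) hx.
set x := INR n in x1 l3 ll hL hLl hx *.
set l := ln x in l3 ll hL hLl *.
set l2 := ln l in ll hL hLl *.
set L := (l / l2)%R in hL hLl.
have eqL : (x * l / l2 = x * L)%R by rewrite /L /Rdiv Rmult_assoc.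
rewrite eqL.
set d := sqrt (x * L).
have xL1 : (1 <= x * L)%R by nra.
have dsq : (d * d = x * L)%R by apply: sqrt_sqrt; lra.
have d1 : (1 <= d)%R by rewrite /d -sqrt_1; apply: sqrt_le_1; lra.
have hs1 : 1 < s by lia.
case: (classic (exists v, (d <= INR #|Nb e v|)%R)) => [[v hv]|hnv].
  exists (Nb e v); split; first exact: nbhd_W.
  have : (eps / 8 <= 1)%R.
    rewrite /eps; have : (/ (2 * Mr) <= 1)%R.
      rewrite -Rinv_1; apply: Rinv_le_contravar; lra.
    lra.
  move=> h; apply: (Rle_trans _ d) => //.
  have : (0 <= eps / 8)%R by lra.
  nra.
have hdeg : forall v, (INR #|Nb e v| < d)%R.
  move=> v; apply: Rnot_le_lt => h; apply: hnv; by exists v.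
have [hu1 hu2] := archimed d.
have upd : (0 <= up d)%Z by apply: le_IZR; lra.
set D := Z.to_nat (up d).
have ID : INR D = IZR (up d) by rewrite /D INR_Z.
have HD : forall v, #|Nb e v| <= D.
  move=> v; apply/leP; apply: INR_le; have := hdeg v; lra.
have epsL : (2 <= eps * L)%R.
  have : (eps * K0 = 2)%R by rewrite /K0; field; lra.
  nra.
have [ip1 ip2] := base_Int_part (eps * L).
have ip0 : (0 <= Int_part (eps * L))%Z by apply: le_IZR; lra.
set lam := Z.to_nat (Int_part (eps * L)).
have Ilam : INR lam = IZR (Int_part (eps * L)) by rewrite /lam INR_Z.
have lam0 : 0 < lam.
  apply/ltP; apply: INR_lt; rewrite Ilam /=; lra.
set r := s.-1.
have rs : r.+1 = s by rewrite /r prednK //; lia.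
have HC : Cond r lam D.
  apply: condOK => //.
  set B := 10 * r.+1 * lam.
  apply/leP; apply: INR_le.
  have IB : INR B = (Mr * INR lam)%R by rewrite /B rs mult_INR.
  have B1 : (1 <= INR B)%R.
    change 1%R with (INR 1); apply: le_INR; apply/leP; rewrite /B; nia.
  have BL : (INR B <= L / 2)%R.
    rewrite IB; have : (Mr * (eps * L) = L / 2)%R by rewrite /eps; field; lra.
    have : (0 <= Mr)%R by lra.
    rewrite Ilam; nra.
  rewrite INR_expn.
  apply: (@Rle_trans _ (sqrt x)); last first.
    apply: (@Rle_trans _ d); last by rewrite ID; lra.
    apply: sqrt_le_1; nra.
  apply: ln_le_inv'.
  - apply: pow_lt; lra.
  - apply: sqrt_lt_R0; lra.
  rewrite ln_pow; last lra.
  rewrite ln_sqrt'; last lra.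
  have h1 : (0 <= ln (INR B))%R.
    rewrite -ln_1; apply: ln_le'; lra.
  have h2 : (ln (INR B) <= l2)%R.
    apply: ln_le'; first lra.
    have : (L / 2 <= l)%R by lra.
    lra.
  have h3 : (L * l2 = l)%R by rewrite /L; field; lra.
  rewrite -/l.
  have B0 : (0 <= INR B)%R by lra.
  have := Rmult_le_compat _ _ _ _ B0 h1 BL h2.
  lra.
have Hc : forall K : {set 'I_n}, #|K| = r.+2 -> ~ is_clique e K.
  by move=> K hKc cl; apply: hK; exists K; rewrite -rs.
have [I [iI hI]] := core esy eirr Hc HC HD.
exists I; split; first exact: indep_W.
move: hI; rewrite card_ord => /leP /le_INR; rewrite !mult_INR.
change (INR 2) with 2%R.
rewrite -/x ID Ilam => hI.
have hlam : (eps * L / 2 <= IZR (Int_part (eps * L)))%R by lra.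
have hI0 : (0 <= INR #|I|)%R by apply: pos_INR.
have : (eps * L / 2 * x <= 2 * (d + 1) * INR #|I|)%R.
  apply: (@Rle_trans _ (IZR (Int_part (eps * L)) * x)); first nra.
  apply: (Rle_trans _ _ _ hI); nra.
move=> h.
have h4 : (2 * (d + 1) * INR #|I| <= 4 * d * INR #|I|)%R by nra.
have h5 : (eps * L / 2 * x = 4 * (d * (eps / 8 * d)))%R.
  have : (eps * L / 2 * x = eps / 2 * (x * L))%R by field.
  rewrite -dsq; move->; field.
apply: (Rmult_le_reg_l (4 * d)); first lra.
have -> : (4 * d * (eps / 8 * d) = eps * L / 2 * x)%R by rewrite h5; ring.
exact: (Rle_trans _ _ _ h h4).
Qed.
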